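(* Let $\gamma=(\alpha,\beta)\in\mathbb N_0^{2n}$ with $\alpha\ge\beta$, let $\sigma\in\{+,-\}$ with $\alpha>\beta$ if $\sigma=-$, and assume $g_\sigma^\gamma\in\hat A_n^\perp$. Let $y_\pm^{(\ell)}$ be the Commutator Chain of Type II generated by $g_+^\gamma,g_-^\gamma$. Then for all $\ell\ge0$, $$\deg(y_\sigma^{(\ell)})=3^\ell(|\gamma|-2)+2\ge 3^\ell+2 .$$
   Context: Fix $n\ge 1$. The Weyl algebra $A_n$ is the unital associative $\mathbb{C}$-algebra generated by $a_1,\dots,a_n,a_1^\dagger,\dots,a_n^\dagger$ subject to $[a_i,a_j^\dagger]=\delta_{ij}$ and $[a_i,a_j]=[a_i^\dagger,a_j^\dagger]=0$. For $\gamma=(\alpha,\beta)\in\mathbb N_0^{2n}$ set $a^{\gamma}=(a_1^\dagger)^{\alpha_1}\cdots(a_n^\dagger)^{\alpha_n}a_1^{\beta_1}\cdots a_n^{\beta_n}$; these form a $\mathbb C$-basis of $A_n$; $|\gamma|=\sum_j\alpha_j+\sum_j\beta_j$. For $0\neq g\in A_n$, $\deg(g)$ is the largest $|\gamma|$ such that $a^\gamma$ has nonzero coefficient in the expansion of $g$; $\deg(0)=-\infty$. The adjoint $\dagger$ is the conjugate-linear anti-automorphism with $(a_j)^\dagger=a_j^\dagger$, $(a_j^\dagger)^\dagger=a_j$, $1^\dagger=1$. The skew-hermitian Weyl algebra is $\hat A_n=\{g\in A_n: g^\dagger=-g\}$. Let $g_+^\gamma=i((a^\gamma)^\dagger+a^\gamma)$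 and $g_-^\gamma=(a^\gamma)^\dagger-a^\gamma$. With lexicographic order on $\mathbb N_0^n$, a basis element is $g_+^{(\alpha,\beta)}$ with $\alpha\ge\beta$ or $g_-^{(\alpha,\beta)}$ with $\alpha>\beta$; these form an $\mathbb R$-basis of $\hat A_n$. Subspaces of $\hat A_n$ (real spans of basis elements $g_\sigma^{\gamma}$, $\gamma=(\alpha,\beta)$): $\hat A_n^0$ is spanned by $2i$ and $2ia_k^\dagger a_k$ ($1\le k\le n$), i.e. the basis elements with $\alpha=\beta$, $|\gamma|\in\{0,2\}$; $\hat A_n^1$ by basis elements with $|\gamma|=1$; $\hat A_n^2$ by basis elements with $|\gamma|=2$ and $\alpha\ne\beta$; $\hat A_n^=$ by basis elements with $\alpha=\beta$ and $|\gamma|\ge 4$; $\hat A_n^{\mathrm{om}}$ by basis elements with $|\gamma|\ge3$ for which there is a unique index $k$ with $\alpha_k+\beta_k=1$ and $\alpha_j=\beta_j$ for all $j\neq k$; $\hat A_n^\perp$ by all remaining basis elements. Commutator Chain of Type II generated by $g_+^\gamma,g_-^\gamma$: $y_\sigma^{(0)}=g_\sigma^\gamma$ for $\sigma\in\{+,-\}$, and $y_\sigma^{(\ell+1)}=[y_\sigma^{(\ell)},[y_+^{(\ell)},y_-^{(\ell)}]]$ for $\ell\ge0$. *)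

(* Defs.v *)
(* Weyl algebra A_n realised on its normal-ordered basis,
   using multinomials' {mpoly C[n + n]} as the underlying vector space. *)
From HB Require Import structures.
From mathcomp Require Import all_boot all_order all_algebra.
From mathcomp Require Import mpoly.
Set Implicit Arguments. Unset Strict Implicit. Unset Printing Implicit Defensive.
Import Order.TTheory GRing.Theory Num.Theory.
Local Open Scope ring_scope.

Section Weyl.
Variables (C : numClosedFieldType) (n : nat).

(* Elements of A_n: C-linear combinations of the normal-ordered monomials
   a^gamma = (a^dagger)^alpha a^beta, gamma = (alpha, beta) in N_0^(2n).
   Variable i (i < n) of the mpoly carries alpha_i, variable n + i carries beta_i. *)
Definition WA := {mpoly C[n + n]}.

Definition mk (a b : 'I_n -> nat) : 'X_{1..n + n} :=
  [multinom (match split i with inl j => a j | inr j => b j end) | i < n + n].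

Definition alpha_of (m : 'X_{1..n + n}) (j : 'I_n) : nat := m (lshift n j).
Definition beta_of (m : 'X_{1..n + n}) (j : 'I_n) : nat := m (rshift n j).

Definition aX (a b : 'I_n -> nat) : WA := 'X_[mk a b].

(* Product of two normal-ordered monomials (Weyl normal-ordering formula,
   from [a_i, a_j^dagger] = delta_ij and the other commutators vanishing):
   a^(al,be) a^(al',be') =
     sum_k prod_j C(be_j,k_j) C(al'_j,k_j) k_j! a^(al+al'-k, be+be'-k). *)
Definition wmulX (m1 m2 : 'X_{1..n + n}) : WA :=
  \sum_(k : {ffun 'I_n -> 'I_(mdeg m1).+1})
     ((\prod_(j < n) ('C(beta_of m1 j, k j) * 'C(alpha_of m2 j, k j) * (k j)`!))%N)%:R
     *: aX (fun j => alpha_of m1 j + alpha_of m2 j - k j)%N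
           (fun j => beta_of m1 j + beta_of m2 j - k j)%N.

Definition wmul (p q : WA) : WA :=
  \sum_(m1 <- msupp p) \sum_(m2 <- msupp q) (p@_m1 * q@_m2) *: wmulX m1 m2.

Definition wcomm (p q : WA) : WA := wmul p q - wmul q p.

Definition dagger (p : WA) : WA :=
  \sum_(m <- msupp p) (p@_m)^* *: aX (beta_of m) (alpha_of m).

(* deg, with None standing for -infinity (deg 0) *)
Definition wdeg (p : WA) : option nat :=
  if p == 0 then None else Some (msize p).-1.

(* g_+^gamma (sigma = true) and g_-^gamma (sigma = false) *)
Definition gpm (sigma : bool) (a b : 'I_n -> nat) : WA :=
  if sigma then 'i *: (dagger (aX a b) + aX a b)
  else dagger (aX a b) - aX a b.

Fixpoint chain2 (gp gm : WA) (l : nat) : WA * WA :=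
  match l with
  | 0 => (gp, gm)
  | l'.+1 => let: (yp, ym) := chain2 gp gm l' in
             let c := wcomm yp ym in (wcomm yp c, wcomm ym c)
  end.

Definition ychain (a b : 'I_n -> nat) (sigma : bool) (l : nat) : WA :=
  let y := chain2 (gpm true a b) (gpm false a b) l in
  if sigma then y.1 else y.2.

End Weyl.

Definition gsize (n : nat) (a b : 'I_n -> nat) : nat := (\sum_(j < n) (a j + b j))%N.

Definition lexgt (n : nat) (a b : 'I_n -> nat) : Prop :=
  exists k : 'I_n, (forall j : 'I_n, (j < k)%N -> a j = b j) /\ (b k < a k)%N.
Definition lexge (n : nat) (a b : 'I_n -> nat) : Prop :=
  (forall j, a j = b j) \/ lexgt a b.

Definition diag_idx (n : nat) (a b : 'I_n -> nat) : Prop := forall j, a j = b j.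
Definition in_A0 n (a b : 'I_n -> nat) : Prop :=
  diag_idx a b /\ (gsize a b = 0%N \/ gsize a b = 2%N).
Definition in_A1 n (a b : 'I_n -> nat) : Prop := gsize a b = 1%N.
Definition in_A2 n (a b : 'I_n -> nat) : Prop := gsize a b = 2%N /\ ~ diag_idx a b.
Definition in_Aeq n (a b : 'I_n -> nat) : Prop := diag_idx a b /\ (4 <= gsize a b)%N.
Definition om_at n (a b : 'I_n -> nat) (k : 'I_n) : Prop :=
  (a k + b k = 1)%N /\ (forall j, j != k -> a j = b j).
Definition in_Aom n (a b : 'I_n -> nat) : Prop :=
  (3 <= gsize a b)%N /\ exists k, om_at a b k /\ forall k', om_at a b k' -> k' = k.
Definition in_Aperp n (a b : 'I_n -> nat) : Prop :=
  ~ in_A0 a b /\ ~ in_A1 a b /\ ~ in_A2 a b /\ ~ in_Aeq a b /\ ~ in_Aom a b.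

(* Main.v *)
Require Import Defs.
From HB Require Import structures.
From mathcomp Require Import all_boot all_order all_algebra.
From mathcomp Require Import mpoly bigenough ssrcomplements.
From mathcomp Require Import zify ring lra.
Set Implicit Arguments. Unset Strict Implicit. Unset Printing Implicit Defensive.
Import Order.TTheory GRing.Theory Num.Theory BigEnough.
Local Open Scope ring_scope.

Section Lin.
Variables (R : comNzRingType) (k : nat) (V : lmodType R).
Implicit Types (p q : {mpoly R[k]}) (G : 'X_{1..k} -> V).

Definition lin G p : V := \sum_(m <- msupp p) p@_m *: G m.

Lemma linE G p w : (msize p <= w)%N -> lin G p = \sum_(m : 'X_{1..k < w}) p@_m *: G m.
Proof.
move=> lt_pk; pose I : subFinType _ := 'X_{1..k < w}.
rewrite /lin (big_mksub I) //=; first last.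
  by move=> x /msize_mdeg_lt /leq_trans; apply.
  by rewrite msupp_uniq.
by rewrite big_rmcond //= => i; move/memN_msupp_eq0 ->; rewrite scale0r.
Qed.

Lemma linD G p q : lin G (p + q) = lin G p + lin G q.
Proof.
pose_big_enough i.
  by rewrite !(linE G _ (w := i)) // -big_split /=; apply: eq_bigr => m _; rewrite mcoeffD scalerDl.
by close.
Qed.

Lemma linZ G c p : lin G (c *: p) = c *: lin G p.
Proof.
pose_big_enough i.
  rewrite !(linE G _ (w := i)) // scaler_sumr; apply: eq_bigr => m _.
  by rewrite mcoeffZ scalerA.
by close.
Qed.

Lemma lin0 G : lin G 0 = 0.
Proof. by rewrite /lin msupp0 big_nil. Qed.

Lemma linN G p : lin G (- p) = - lin G p.
Proof. by rewrite -[- p]scaleN1r linZ scaleN1r. Qed.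

Lemma linB G p q : lin G (p - q) = lin G p - lin G q.
Proof. by rewrite linD linN. Qed.

Lemma linX G m : lin G 'X_[m] = G m.
Proof. by rewrite /lin msuppX big_seq1 mcoeffX eqxx scale1r. Qed.

Lemma linGD G1 G2 p : lin (fun m => G1 m + G2 m) p = lin G1 p + lin G2 p.
Proof. by rewrite /lin -big_split /=; apply: eq_bigr => m _; rewrite scalerDr. Qed.

Lemma linGZ G c p : lin (fun m => c *: G m) p = c *: lin G p.
Proof. by rewrite /lin scaler_sumr; apply: eq_bigr => m _; rewrite !scalerA mulrC. Qed.

Lemma linGN G p : lin (fun m => - G m) p = - lin G p.
Proof. by rewrite /lin -sumrN; apply: eq_bigr => m _; rewrite scalerN. Qed.

Lemma linGB G1 G2 p : lin (fun m => G1 m - G2 m) p = lin G1 p - lin G2 p.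
Proof. by rewrite linGD linGN. Qed.

Lemma lin_ext G1 G2 p : (forall m, m \in msupp p -> G1 m = G2 m) -> lin G1 p = lin G2 p.
Proof. by move=> h; rewrite /lin big_seq_cond [RHS]big_seq_cond; apply: eq_bigr => m /andP[/h -> _]. Qed.

End Lin.

Lemma lin_id (R : comNzRingType) k (p : {mpoly R[k]}) : lin (fun m => 'X_[m] : {mpoly R[k]}) p = p.
Proof. by rewrite /lin -mpolyE. Qed.


Section Allm.
Variables (R : nzRingType) (k : nat).
Implicit Types (p q : {mpoly R[k]}).
Definition allm (P : pred 'X_{1..k}) p := forall m, m \in msupp p -> P m.

Lemma allm0 (P : pred 'X_{1..k}) : allm P 0.
Proof. by move=> m; rewrite msupp0. Qed.

Lemma allmD (P : pred 'X_{1..k}) p q : allm P p -> allm P q -> allm P (p + q).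
Proof. by move=> hp hq m /msuppD_le; rewrite mem_cat => /orP[/hp|/hq]. Qed.

Lemma allmN (P : pred 'X_{1..k}) p : allm P p -> allm P (- p).
Proof. by move=> hp m; rewrite (perm_mem (msuppN p)) => /hp. Qed.

Lemma allmB (P : pred 'X_{1..k}) p q : allm P p -> allm P q -> allm P (p - q).
Proof. by move=> hp hq; apply: allmD => //; apply: allmN. Qed.

Lemma allmZ (P : pred 'X_{1..k}) (c : R) p : allm P p -> allm P (c *: p).
Proof. by move=> hp m /msuppZ_le /hp. Qed.

Lemma allmX (P : pred 'X_{1..k}) (c : R) m : P m -> allm P (c *: 'X_[m]).
Proof. by move=> hm m' /msuppZ_le; rewrite msuppX inE => /eqP ->. Qed.

Lemma allm_sum (P : pred 'X_{1..k}) I (r : seq I) (Q : pred I) (F : I -> {mpoly R[k]}) :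
  (forall i, Q i -> allm P (F i)) -> allm P (\sum_(i <- r | Q i) F i).
Proof.
move=> h; elim: r => [|x r ih]; first by rewrite big_nil; apply: allm0.
rewrite big_cons; case: ifP => // qx; apply: allmD => //; exact: h.
Qed.

Lemma allm_impl (P Q : pred 'X_{1..k}) p : (forall m, P m -> Q m) -> allm P p -> allm Q p.
Proof. by move=> h hp m /hp /h. Qed.
End Allm.

Lemma allm_lin (R : comNzRingType) k k' (P : pred 'X_{1..k'}) (G : 'X_{1..k} -> {mpoly R[k']}) (p : {mpoly R[k]}) :
  (forall m, m \in msupp p -> allm P (G m)) -> allm P (lin G p).
Proof.
move=> h; rewrite /lin big_seq_cond; apply: allm_sum => m /andP[hm _].
exact/allmZ/h.
Qed.
Section W.
Variables (C : numClosedFieldType) (n : nat).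
Local Notation WA := (WA C n).
Local Notation aX := (@aX C n).
Local Notation mon := ('X_{1..n + n}).
Local Notation alpha_of := (@alpha_of n).
Local Notation beta_of := (@beta_of n).
Local Notation mk := (@mk n).
Local Notation wmulX := (@wmulX C n).

Lemma mk_l a b j : mk a b (lshift n j) = a j.
Proof. by rewrite /mk mnmE (unsplitK (inl j)). Qed.
Lemma mk_r a b j : mk a b (rshift n j) = b j.
Proof. by rewrite /mk mnmE (unsplitK (inr j)). Qed.
Lemma alpha_mk a b j : alpha_of (mk a b) j = a j.
Proof. exact: mk_l. Qed.
Lemma beta_mk a b j : beta_of (mk a b) j = b j.
Proof. exact: mk_r. Qed.
Lemma mkK (m : mon) : mk (alpha_of m) (beta_of m) = m.
Proof.
apply/mnmP => i; rewrite /Defs.mk mnmE; case: splitP => j hij; rewrite /Defs.alpha_of /Defs.beta_of; congr (m _); apply/val_inj; by rewrite /= hij.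
Qed.
Lemma mk_ext a a' b b' : a =1 a' -> b =1 b' -> mk a b = mk a' b'.
Proof. by move=> ha hb; apply/mnmP => i; rewrite /mk !mnmE; case: split => j. Qed.
Lemma aX_ext a a' b b' : a =1 a' -> b =1 b' -> aX a b = aX a' b'.
Proof. by move=> ha hb; rewrite /Defs.aX (mk_ext ha hb). Qed.

Lemma mdeg_ab (m : mon) : mdeg m = (\sum_(j < n) alpha_of m j + \sum_(j < n) beta_of m j)%N.
Proof. by rewrite mdegE big_split_ord. Qed.
Lemma mdeg_mk a b : mdeg (mk a b) = (\sum_(j < n) a j + \sum_(j < n) b j)%N.
Proof.
rewrite mdeg_ab; congr (_ + _)%N; apply: eq_bigr => j _; [exact: mk_l|exact: mk_r].
Qed.
Lemma beta_le_mdeg (m : mon) j : (beta_of m j <= mdeg m)%N.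
Proof. by rewrite mdeg_ab [X in (_ + X)%N](bigD1 j) //= addnCA leq_addr. Qed.
Lemma alpha_le_mdeg (m : mon) j : (alpha_of m j <= mdeg m)%N.
Proof. by rewrite mdeg_ab (bigD1 j) //= -addnA leq_addr. Qed.

Lemma aX_prod a b : aX a b = \prod_(j < n) ('X_(lshift n j) ^+ a j * 'X_(rshift n j) ^+ b j).
Proof.
rewrite /Defs.aX mpolyXE_id big_split_ord /= big_split /=.
by congr (_ * _); apply: eq_bigr => j _; rewrite ?mk_l ?mk_r.
Qed.

Definition cf (b a i : nat) : nat := ('C(b, i) * 'C(a, i) * i`!)%N.

Definition Tk (m1 m2 : mon) N (k : {ffun 'I_n -> 'I_N}) : WA :=
  ((\prod_(j < n) cf (beta_of m1 j) (alpha_of m2 j) (k j))%N)%:R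
     *: aX (fun j => alpha_of m1 j + alpha_of m2 j - k j)%N
           (fun j => beta_of m1 j + beta_of m2 j - k j)%N.

Definition gfac (m1 m2 : mon) (j : 'I_n) (i : nat) : WA :=
  (cf (beta_of m1 j) (alpha_of m2 j) i)%:R *:
    ('X_(lshift n j) ^+ (alpha_of m1 j + alpha_of m2 j - i) *
     'X_(rshift n j) ^+ (beta_of m1 j + beta_of m2 j - i)).

Lemma Tk_prod m1 m2 N (k : {ffun 'I_n -> 'I_N}) : Tk m1 m2 k = \prod_(j < n) gfac m1 m2 j (k j) :> WA.
Proof.
by rewrite /Tk /gfac scaler_prod natr_prod aX_prod.
Qed.

Lemma sum_ord_trunc (V : zmodType) N b (F : nat -> V) :
  (b < N)%N -> (forall i, (b < i)%N -> F i = 0) ->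
  \sum_(i < N) F i = \sum_(i < b.+1) F i.
Proof.
move=> hb hF; rewrite [RHS](big_ord_widen _ _ hb) [LHS](bigID (fun i : 'I_N => (i < b.+1)%N)) /=.
by rewrite [X in _ + X]big1 ?addr0 // => i; rewrite -leqNgt => /hF.
Qed.

Lemma gfac0 m1 m2 j i : (beta_of m1 j < i)%N -> gfac m1 m2 j i = 0.
Proof. by move=> h; rewrite /gfac /cf bin_small // !mul0n scale0r. Qed.

Lemma sumTk m1 m2 N : (mdeg m1 < N)%N ->
  \sum_(k : {ffun 'I_n -> 'I_N}) Tk m1 m2 k =
  \prod_(j < n) \sum_(i < (beta_of m1 j).+1) gfac m1 m2 j i.
Proof.
move=> hN; rewrite (eq_bigr (fun k : {ffun 'I_n -> 'I_N} => \prod_(j < n) gfac m1 m2 j (k j))); last by move=> k _; rewrite Tk_prod.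
rewrite -(bigA_distr_bigA (fun j (i : 'I_N) => gfac m1 m2 j i)) /=.
apply: eq_bigr => j _.
apply: (@sum_ord_trunc WA N (beta_of m1 j) (gfac m1 m2 j)).
  exact: leq_ltn_trans (beta_le_mdeg m1 j) hN.
by move=> i; exact: gfac0.
Qed.

Lemma wmulXE m1 m2 N : (mdeg m1 < N)%N ->
  wmulX m1 m2 = \sum_(k : {ffun 'I_n -> 'I_N}) Tk m1 m2 k.
Proof.
move=> hN; rewrite sumTk // -(sumTk m2 (ltnSn (mdeg m1))).
by [].
Qed.

End W.
Section Comb.
Variables (n K : nat).
Local Notation N := K.+2.
Definition ksum (k : {ffun 'I_n -> 'I_N}) : nat := (\sum_(j < n) (k j : nat))%N.
Definition ej (j : 'I_n) : {ffun 'I_n -> 'I_N} := [ffun i => inord (i == j)].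

Lemma ejE j i : (ej j i : nat) = (i == j).
Proof. by rewrite /ej ffunE inordK // ltnS; case: (i == j). Qed.

Lemma ksum_ej j : ksum (ej j) = 1%N.
Proof.
rewrite /ksum (bigD1 j) //= ejE eqxx big1 // => i hi; by rewrite ejE (negbTE hi).
Qed.

Lemma ksum1P (k : {ffun 'I_n -> 'I_N}) : ksum k = 1%N -> exists j, k = ej j.
Proof.
move=> hk.
have [j hj] : exists j, (k j : nat) != 0%N.
  apply/existsP; apply: contraT; rewrite negb_exists => /forallP h.
  by move: hk; rewrite /ksum big1 // => i _; apply/eqP; move: (h i); rewrite negbK.
exists j; apply/ffunP => i; apply/val_inj; rewrite /= ejE.
move: hk; rewrite /ksum (bigD1 j) //= => hk.
have hrest : (\sum_(i0 < n | i0 != j) (k i0 : nat) = 0)%N.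
  by move: hk hj; rewrite -lt0n; set s := (\sum_(_ < _ | _) _)%N; set t := nat_of_ord _; lia.
have hkj : (k j : nat) = 1%N by move: hk; rewrite hrest addn0.
case: (eqVneq i j) => [->|hij] //.
move/eqP: hrest; rewrite sum_nat_eq0 => /forallP /(_ i).
by rewrite hij => /eqP.
Qed.

Lemma ej_inj : injective ej.
Proof.
move=> i j h; move: (congr1 (fun k : {ffun 'I_n -> 'I_N} => (k i : nat)) h).
by rewrite /= !ejE eqxx; case: eqP.
Qed.

Lemma sum_ksum1 (V : zmodType) (f : {ffun 'I_n -> 'I_N} -> V) :
  \sum_(k | ksum k == 1%N) f k = \sum_(j < n) f (ej j).
Proof.
rewrite [RHS](eq_bigr (fun j => \sum_k (if k == ej j then f k else 0))); last first.
  by move=> j _; rewrite -big_mkcond big_pred1_eq.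
rewrite [RHS]exchange_big /= [LHS]big_mkcond /=; apply: eq_bigr => k _.
case: ifP => [/eqP /ksum1P [j0 ->]|h].
  rewrite (bigD1 j0) //= eqxx big1 ?addr0 // => j hj.
  by case: eqP => // /ej_inj hh; move: hj; rewrite hh eqxx.
by rewrite big1 // => j _; case: eqP => // hk; move: h; rewrite hk ksum_ej eqxx.
Qed.
End Comb.
Section W2.
Variables (C : numClosedFieldType) (n : nat).
Local Notation WA := (WA C n).
Local Notation aX := (@aX C n).
Local Notation mon := ('X_{1..n + n}).
Local Notation alpha_of := (@alpha_of n).
Local Notation beta_of := (@beta_of n).
Local Notation mk := (@mk n).
Local Notation wmulX := (@wmulX C n).

Definition cc (m1 m2 : mon) N (k : {ffun 'I_n -> 'I_N}) : nat :=
  (\prod_(j < n) cf (beta_of m1 j) (alpha_of m2 j) (k j))%N.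

Definition Hk (m1 m2 : mon) N (k : {ffun 'I_n -> 'I_N}) : WA :=
  ((cc m1 m2 k)%:R - (cc m2 m1 k)%:R) *:
    aX (fun j => alpha_of m1 j + alpha_of m2 j - k j)%N
       (fun j => beta_of m1 j + beta_of m2 j - k j)%N.

Definition pbX (m1 m2 : mon) : WA :=
  \sum_(j < n) ((beta_of m1 j * alpha_of m2 j)%N%:R - (beta_of m2 j * alpha_of m1 j)%N%:R) *:
    aX (fun i => alpha_of m1 i + alpha_of m2 i - (i == j))%N
       (fun i => beta_of m1 i + beta_of m2 i - (i == j))%N.

Lemma commX m1 m2 K : (mdeg m1 + mdeg m2 < K.+2)%N ->
  wmulX m1 m2 - wmulX m2 m1 = \sum_(k : {ffun 'I_n -> 'I_K.+2}) Hk m1 m2 k.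
Proof.
move=> hK.
rewrite (@wmulXE C n m1 m2 K.+2); last exact: leq_ltn_trans (leq_addr _ _) hK.
rewrite (@wmulXE C n m2 m1 K.+2); last exact: leq_ltn_trans (leq_addl _ _) hK.
rewrite -sumrB; apply: eq_bigr => k _; rewrite /Tk /Hk scalerBl; congr (_ - _).
by congr (_ *: _); apply: aX_ext => j; rewrite addnC.
Qed.

Lemma cf0 b a : cf b a 0 = 1%N.
Proof. by rewrite /cf !bin0. Qed.
Lemma cf1 b a : cf b a 1 = (b * a)%N.
Proof. by rewrite /cf !bin1 muln1. Qed.

Lemma cc_ej m1 m2 K j : cc m1 m2 (ej K j) = (beta_of m1 j * alpha_of m2 j)%N.
Proof.
rewrite /cc (bigD1 j) //= ejE eqxx cf1 big1 ?muln1 // => i hi.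
by rewrite ejE (negbTE hi) cf0.
Qed.

Lemma Hk_ej m1 m2 K j : Hk m1 m2 (ej K j) =
  ((beta_of m1 j * alpha_of m2 j)%N%:R - (beta_of m2 j * alpha_of m1 j)%N%:R) *:
    aX (fun i => alpha_of m1 i + alpha_of m2 i - (i == j))%N
       (fun i => beta_of m1 i + beta_of m2 i - (i == j))%N.
Proof.
rewrite /Hk !cc_ej; congr (_ *: _); apply: aX_ext => i; by rewrite ejE.
Qed.

Lemma commX_split m1 m2 K : (mdeg m1 + mdeg m2 < K.+2)%N ->
  wmulX m1 m2 - wmulX m2 m1 =
  pbX m1 m2 + \sum_(k : {ffun 'I_n -> 'I_K.+2} | ksum k != 1%N) Hk m1 m2 k.
Proof.
move=> hK; rewrite (commX hK) (bigID (fun k => ksum k == 1%N)) /=; congr (_ + _).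
rewrite sum_ksum1 /pbX; apply: eq_bigr => j _; exact: Hk_ej.
Qed.

Lemma pbX_sum m1 m2 K : pbX m1 m2 = \sum_(k : {ffun 'I_n -> 'I_K.+2} | ksum k == 1%N) Hk m1 m2 k.
Proof. by rewrite sum_ksum1 /pbX; apply: eq_bigr => j _; rewrite Hk_ej. Qed.

Lemma cc_pos m1 m2 N (k : {ffun 'I_n -> 'I_N}) : (0 < cc m1 m2 k)%N ->
  forall j, (k j <= beta_of m1 j)%N /\ (k j <= alpha_of m2 j)%N.
Proof.
move=> h j; have := @gt0_prodn _ _ _ h j isT; rewrite /cf !muln_gt0 !bin_gt0.
by case/andP => /andP[-> ->].
Qed.

Lemma cc_ksum0 m1 m2 K (k : {ffun 'I_n -> 'I_K.+2}) : ksum k = 0%N -> cc m1 m2 k = 1%N.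
Proof.
move/eqP; rewrite /ksum sum_nat_eq0 => /forallP h.
by rewrite /cc big1 // => j _; move/eqP: (h j) => ->; rewrite cf0.
Qed.

Lemma sum_subK (f g : 'I_n -> nat) : (forall j, g j <= f j)%N ->
  (\sum_(j < n) (f j - g j) + \sum_(j < n) g j = \sum_(j < n) f j)%N.
Proof. by move=> h; rewrite -big_split /=; apply: eq_bigr => j _; rewrite subnK. Qed.

Definition mchg (m1 m2 m : mon) : bool :=
  [forall j, alpha_of m j + (beta_of m1 j + beta_of m2 j) == beta_of m j + (alpha_of m1 j + alpha_of m2 j)]%N.

Lemma mk_prop m1 m2 (k : 'I_n -> nat) :
  (forall j, k j <= alpha_of m1 j + alpha_of m2 j /\ k j <= beta_of m1 j + beta_of m2 j)%N ->
  forall m, m = mk (fun j => alpha_of m1 j + alpha_of m2 j - k j)%N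
              (fun j => beta_of m1 j + beta_of m2 j - k j)%N ->
  (mdeg m + 2 * \sum_(j < n) k j == mdeg m1 + mdeg m2)%N && mchg m1 m2 m.
Proof.
move=> hk m ->; apply/andP; split.
  rewrite mdeg_mk !mdeg_ab.
  have h1 := sum_subK (fun j => proj1 (hk j)).
  have h2 := sum_subK (fun j => proj2 (hk j)).
  rewrite !big_split /= in h1 h2.
  apply/eqP; rewrite addnACA -h1 -h2.
  set A := (\sum_(_ < _) _)%N; set B := (\sum_(_ < _) _)%N; set D := (\sum_(_ < _) _)%N; lia.
apply/forallP => j; rewrite alpha_mk beta_mk; apply/eqP.
by case: (hk j) => h1 h2; lia.
Qed.

Lemma Hk_supp m1 m2 K (k : {ffun 'I_n -> 'I_K.+2}) :
  allm (fun m => (mdeg m + 2 * ksum k == mdeg m1 + mdeg m2)%N && mchg m1 m2 m) (Hk m1 m2 k).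
Proof.
case: (eqVneq (cc m1 m2 k) (cc m2 m1 k)) => [e|ne].
  by rewrite /Hk e subrr scale0r; apply: allm0.
apply: allmX; apply: (mk_prop (k := fun j => k j)) => [j|//].
have [h|h] : (0 < cc m1 m2 k)%N \/ (0 < cc m2 m1 k)%N.
  by move: ne; case: (cc m1 m2 k) => [|?]; case: (cc m2 m1 k) => [|?]; auto.
  by case: (cc_pos h j) => ha hb; split; [apply: leq_trans hb (leq_addl _ _)|apply: leq_trans ha (leq_addr _ _)].
by case: (cc_pos h j) => ha hb; split; [apply: leq_trans hb (leq_addr _ _)|apply: leq_trans ha (leq_addl _ _)].
Qed.

Lemma pbX_supp m1 m2 : allm (fun m => (mdeg m + 2 == mdeg m1 + mdeg m2)%N && mchg m1 m2 m) (pbX m1 m2).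
Proof.
rewrite (pbX_sum m1 m2 0); apply: allm_sum => k /eqP hk.
by move=> m /Hk_supp; rewrite hk.
Qed.

Definition comR m1 m2 : WA := wmulX m1 m2 - wmulX m2 m1 - pbX m1 m2.

Lemma comR_supp m1 m2 : allm (fun m => mdeg m + 4 <= mdeg m1 + mdeg m2)%N (comR m1 m2).
Proof.
rewrite /comR (@commX_split m1 m2 (mdeg m1 + mdeg m2)) // addrC addKr.
apply: allm_sum => k hk1.
have [hk0|hk0] := eqVneq (ksum k) 0%N.
  by rewrite /Hk !cc_ksum0 // subrr scale0r; apply: allm0.
move=> m /Hk_supp /andP[/eqP h _].
move: hk1 hk0 h; set s := ksum k; set t := (mdeg m1 + mdeg m2)%N; lia.
Qed.

End W2.
Section Bil.
Variables (R : comNzRingType) (k : nat) (V : lmodType R).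
Implicit Types (p q : {mpoly R[k]}) (F : 'X_{1..k} -> 'X_{1..k} -> V).
Definition bil F p q : V := lin (fun m1 => lin (F m1) q) p.

Lemma bilDl F p1 p2 q : bil F (p1 + p2) q = bil F p1 q + bil F p2 q.
Proof. exact: linD. Qed.
Lemma bilDr F p q1 q2 : bil F p (q1 + q2) = bil F p q1 + bil F p q2.
Proof. by rewrite /bil -linGD; apply: lin_ext => m _; rewrite linD. Qed.
Lemma bilZl F c p q : bil F (c *: p) q = c *: bil F p q.
Proof. exact: linZ. Qed.
Lemma bilZr F c p q : bil F p (c *: q) = c *: bil F p q.
Proof. by rewrite /bil -linGZ; apply: lin_ext => m _; rewrite linZ. Qed.
Lemma bilNl F p q : bil F (- p) q = - bil F p q.
Proof. exact: linN. Qed.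
Lemma bilNr F p q : bil F p (- q) = - bil F p q.
Proof. by rewrite -[- q]scaleN1r bilZr scaleN1r. Qed.
Lemma bilBl F p1 p2 q : bil F (p1 - p2) q = bil F p1 q - bil F p2 q.
Proof. by rewrite bilDl bilNl. Qed.
Lemma bilBr F p q1 q2 : bil F p (q1 - q2) = bil F p q1 - bil F p q2.
Proof. by rewrite bilDr bilNr. Qed.
Lemma bil0l F q : bil F 0 q = 0.
Proof. exact: lin0. Qed.
Lemma bil0r F p : bil F p 0 = 0.
Proof. by rewrite -[0 in LHS](scale0r 0) bilZr scale0r. Qed.
Lemma bilFD F1 F2 p q : bil (fun a b => F1 a b + F2 a b) p q = bil F1 p q + bil F2 p q.
Proof. by rewrite /bil -linGD; apply: lin_ext => m _; rewrite linGD. Qed.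
Lemma bilFN F p q : bil (fun a b => - F a b) p q = - bil F p q.
Proof. by rewrite /bil -linGN; apply: lin_ext => m _; rewrite linGN. Qed.
Lemma bilFB F1 F2 p q : bil (fun a b => F1 a b - F2 a b) p q = bil F1 p q - bil F2 p q.
Proof. by rewrite bilFD bilFN. Qed.
Lemma bil_swap F p q : bil F q p = bil (fun a b => F b a) p q.
Proof.
rewrite /bil /lin.
under eq_bigr do rewrite scaler_sumr.
under [RHS]eq_bigr do rewrite scaler_sumr.
rewrite exchange_big /=; apply: eq_bigr => m1 _; apply: eq_bigr => m2 _.
by rewrite !scalerA mulrC.
Qed.
Lemma bil_ext F1 F2 p q : (forall a b, F1 a b = F2 a b) -> bil F1 p q = bil F2 p q.
Proof. by move=> h; rewrite /bil; apply: lin_ext => m _; apply: lin_ext => m' _; apply: h. Qed.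
Lemma bilXX F m1 m2 : bil F 'X_[m1] 'X_[m2] = F m1 m2.
Proof. by rewrite /bil linX linX. Qed.
End Bil.

Lemma allm_bil (R : comNzRingType) k (P : pred 'X_{1..k}) (F : 'X_{1..k} -> 'X_{1..k} -> {mpoly R[k]}) p q :
  (forall m1 m2, m1 \in msupp p -> m2 \in msupp q -> allm P (F m1 m2)) -> allm P (bil F p q).
Proof.
move=> h; apply: allm_lin => m1 h1; apply: allm_lin => m2 h2; exact: h.
Qed.

Section Approx.
Variables (C : numClosedFieldType) (n : nat).
Local Notation WA := (WA C n).
Local Notation mon := ('X_{1..n + n}).
Local Notation wmulX := (@wmulX C n).
Local Notation pbX := (@pbX C n).
Local Notation comR := (@comR C n).

Definition pb (p q : WA) : WA := bil pbX p q.
Definition cmX (m1 m2 : mon) : WA := wmulX m1 m2 - wmulX m2 m1.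

Lemma wmul_bil (p q : WA) : wmul p q = bil wmulX p q.
Proof.
rewrite /wmul /bil /lin; apply: eq_bigr => m1 _; rewrite scaler_sumr.
by apply: eq_bigr => m2 _; rewrite scalerA.
Qed.

Lemma wcomm_bil (p q : WA) : wcomm p q = bil cmX p q.
Proof. by rewrite /wcomm !wmul_bil /cmX bilFB [bil _ q p]bil_swap. Qed.

Lemma cmX_split m1 m2 : cmX m1 m2 = pbX m1 m2 + comR m1 m2.
Proof. by rewrite /comR /cmX addrCA subrr addr0. Qed.

Lemma cmX_supp m1 m2 : allm (fun m => mdeg m + 2 <= mdeg m1 + mdeg m2)%N (cmX m1 m2).
Proof.
rewrite cmX_split; apply: allmD.
  by move=> m /pbX_supp /andP[/eqP <- _].
by move=> m /comR_supp h; apply: leq_trans h; rewrite leq_add2l.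
Qed.

Definition hmg (d : nat) (p : WA) := allm (fun m => mdeg m == d) p.
Definition lowr (d : nat) (p : WA) := allm (fun m => mdeg m < d)%N p.
Definition approx (d : nat) (p P : WA) := hmg d P /\ lowr d (p - P).

Lemma pb_hmg d1 d2 P Q : hmg d1 P -> hmg d2 Q -> hmg (d1 + d2 - 2)%N (pb P Q).
Proof.
move=> hP hQ; apply: allm_bil => m1 m2 h1 h2 m /pbX_supp /andP[/eqP h _].
by move: (hP _ h1) (hQ _ h2) h => /eqP <- /eqP <- <-; rewrite addnK.
Qed.

Lemma approx_le d p P : approx d p P -> allm (fun m => mdeg m <= d)%N p.
Proof.
case=> hP hl; have -> : p = P + (p - P) by rewrite addrC subrK.
apply: allmD; first by move=> m /hP /eqP ->.
by move=> m /hl /ltnW.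
Qed.

Lemma comm_approx d1 d2 p P q Q : approx d1 p P -> approx d2 q Q ->
  approx (d1 + d2 - 2)%N (wcomm p q) (pb P Q).
Proof.
move=> ap aq; split; first exact: pb_hmg ap.1 aq.1.
have hq := approx_le aq.
have e1 : bil cmX P Q = pb P Q + bil comR P Q by rewrite (bil_ext P Q cmX_split) bilFD.
have hp : p = P + (p - P) by rewrite addrC subrK.
have hq' : q = Q + (q - Q) by rewrite addrC subrK.
rewrite wcomm_bil {1}hp bilDl {1}hq' bilDr e1.
rewrite [_ - pb P Q]addrC !addrA addNr add0r.
case: ap => hP hp'; case: aq => hQ hq''.
apply: allmD; first apply: allmD.
- apply: allm_bil => m1 m2 /hP /eqP h1 /hQ /eqP h2 m /comR_supp.
  by rewrite h1 h2 => h; rewrite ltn_subRL; move: h; set t := mdeg m; lia.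
- apply: allm_bil => m1 m2 /hP /eqP h1 /hq'' h2 m /cmX_supp.
  by rewrite h1 => h; rewrite ltn_subRL; move: h h2; set t := mdeg m; set u := mdeg m2; lia.
- apply: allm_bil => m1 m2 /hp' h1 /hq h2 m /cmX_supp.
  by move=> h; rewrite ltn_subRL; move: h h1 h2; set t := mdeg m; set u := mdeg m2; set v := mdeg m1; lia.
Qed.
End Approx.
Section Chain.
Variables (C : numClosedFieldType) (n : nat).
Local Notation WA := (WA C n).
Local Notation aX := (@aX C n).
Local Notation mon := ('X_{1..n + n}).
Local Notation alpha_of := (@alpha_of n).
Local Notation beta_of := (@beta_of n).
Local Notation mk := (@mk n).
Local Notation pbX := (@pbX C n).
Local Notation pb := (@pb C n).

Lemma pbX_swap m1 m2 : pbX m2 m1 = - pbX m1 m2.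
Proof.
rewrite /pbX -sumrN; apply: eq_bigr => j _; rewrite -scaleNr opprB.
by congr (_ *: _); apply: aX_ext => i; rewrite addnC.
Qed.

Lemma pb_swap (P Q : WA) : pb Q P = - pb P Q.
Proof. by rewrite /pb bil_swap (bil_ext P Q pbX_swap) bilFN. Qed.

Lemma pb_self (P : WA) : pb P P = 0.
Proof.
have h : pb P P + pb P P = 0 by rewrite {1}pb_swap addNr.
have h2 : (2%:R : C) *: pb P P = 0 by rewrite scaler_nat mulr2n.
have nz : (2%:R : C) != 0 by rewrite pnatr_eq0.
by move: h2 => /eqP; rewrite scaler_eq0 (negbTE nz) => /eqP.
Qed.

Lemma pbDl P1 P2 Q : pb (P1 + P2) Q = pb P1 Q + pb P2 Q. Proof. exact: bilDl. Qed.
Lemma pbDr P Q1 Q2 : pb P (Q1 + Q2) = pb P Q1 + pb P Q2. Proof. exact: bilDr. Qed.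
Lemma pbBl P1 P2 Q : pb (P1 - P2) Q = pb P1 Q - pb P2 Q. Proof. exact: bilBl. Qed.
Lemma pbBr P Q1 Q2 : pb P (Q1 - Q2) = pb P Q1 - pb P Q2. Proof. exact: bilBr. Qed.
Lemma pbZl c P Q : pb (c *: P) Q = c *: pb P Q. Proof. exact: bilZl. Qed.
Lemma pbZr c P Q : pb P (c *: Q) = c *: pb P Q. Proof. exact: bilZr. Qed.

Lemma dagger_aX a b : dagger (aX a b) = aX b a.
Proof.
rewrite /dagger /Defs.aX msuppX big_seq1 mcoeffX eqxx conjC1 scale1r.
by apply: aX_ext => j; rewrite ?alpha_mk ?beta_mk.
Qed.

Variables (al be : 'I_n -> nat).

Definition cstep (UV : WA * WA) : WA :=
  pb ('i *: (UV.2 + UV.1)) (UV.2 - UV.1).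

Fixpoint UVs (l : nat) : WA * WA :=
  match l with
  | 0 => (aX al be, aX be al)
  | l'.+1 => let c := cstep (UVs l') in (pb (UVs l').1 c, pb (UVs l').2 c)
  end.

Definition Ptop l := 'i *: ((UVs l).2 + (UVs l).1).
Definition Mtop l := (UVs l).2 - (UVs l).1.

Lemma cstep_W (UV : WA * WA) : cstep UV = ('i *+ 2) *: pb UV.1 UV.2.
Proof.
rewrite /cstep pbZl pbDl !pbBr !pb_self (pb_swap UV.1 UV.2).
by rewrite sub0r opprK subr0 mulr2n scalerDl scalerDr.
Qed.

Definition Dl (d l : nat) : nat := (3 ^ l * (d - 2) + 2)%N.

Lemma chain_approx (d : nat) : (2 <= d)%N ->
  approx d (gpm C true al be) (Ptop 0) -> approx d (gpm C false al be) (Mtop 0) ->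
  forall l, approx (Dl d l) (chain2 (gpm C true al be) (gpm C false al be) l).1 (Ptop l) /\
            approx (Dl d l) (chain2 (gpm C true al be) (gpm C false al be) l).2 (Mtop l).
Proof.
move=> hd h0p h0m; elim=> [|l [ihp ihm]].
  rewrite /Dl expn0 mul1n subnK //; exact: (conj h0p h0m).
rewrite /=; case: (chain2 _ _ l) ihp ihm => yp ym /= ihp ihm.
have hc := comm_approx ihp ihm.
have e : (Dl d l + (Dl d l + Dl d l - 2) - 2 = Dl d l.+1)%N.
  rewrite /Dl expnS; set t := (3 ^ l * (d - 2))%N; rewrite -mulnA -/t; lia.
have ec : pb (Ptop l) (Mtop l) = cstep (UVs l) by [].
have -> : Ptop l.+1 = pb (Ptop l) (pb (Ptop l) (Mtop l)).
  by rewrite ec {2}/Ptop pbZl pbDl.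
have -> : Mtop l.+1 = pb (Mtop l) (pb (Ptop l) (Mtop l)).
  by rewrite ec {2}/Mtop pbBl.
by rewrite -e; split; apply: comm_approx.
Qed.
End Chain.
Section Charge.
Variables (C : numClosedFieldType) (n : nat).
Local Notation WA := (WA C n).
Local Notation aX := (@aX C n).
Local Notation mon := ('X_{1..n + n}).
Local Notation alpha_of := (@alpha_of n).
Local Notation beta_of := (@beta_of n).
Local Notation mk := (@mk n).
Local Notation pbX := (@pbX C n).
Local Notation pb := (@pb C n).

Definition chg (a b : 'I_n -> nat) (p : WA) :=
  allm (fun m : mon => [forall j, alpha_of m j + b j == beta_of m j + a j]%N) p.

Lemma chg_pb a1 b1 a2 b2 P Q : chg a1 b1 P -> chg a2 b2 Q ->
  chg (fun j => a1 j + a2 j)%N (fun j => b1 j + b2 j)%N (pb P Q).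
Proof.
move=> hP hQ; apply: allm_bil => m1 m2 /hP /forallP h1 /hQ /forallP h2 m /pbX_supp /andP[_ /forallP h].
apply/forallP => j; move: (h1 j) (h2 j) (h j) => /eqP e1 /eqP e2 /eqP e3; apply/eqP.
move: e1 e2 e3; set x1 := alpha_of m1 j; set x2 := alpha_of m2 j; set y1 := beta_of m1 j; set y2 := beta_of m2 j.
set x := alpha_of m j; set y := beta_of m j; lia.
Qed.

Lemma chg_ext a b a' b' p : (forall j, a j + b' j = a' j + b j)%N -> chg a b p -> chg a' b' p.
Proof.
move=> e hp m /hp /forallP h; apply/forallP => j; move: (h j) (e j) => /eqP.
set x := alpha_of m j; set y := beta_of m j; move=> h1 h2; apply/eqP; lia.
Qed.

Lemma chgD a b p q : chg a b p -> chg a b q -> chg a b (p + q).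
Proof. exact: allmD. Qed.
Lemma chgB a b p q : chg a b p -> chg a b q -> chg a b (p - q).
Proof. exact: allmB. Qed.
Lemma chgZ a b c p : chg a b p -> chg a b (c *: p).
Proof. exact: allmZ. Qed.
Lemma chg_aX a b : chg a b (aX a b).
Proof.
move=> m; rewrite /Defs.aX msuppX inE => /eqP ->; apply/forallP => j.
by rewrite alpha_mk beta_mk addnC.
Qed.

Variables (al be : 'I_n -> nat).
Local Notation UVs := (@UVs C n al be).
Local Notation Ptop := (@Ptop C n al be).
Local Notation Mtop := (@Mtop C n al be).

Lemma UVs_chg l : chg al be (UVs l).1 /\ chg be al (UVs l).2.
Proof.
elim: l => [|l [hu hv]] /=; first by split; apply: chg_aX.
have hc : chg (fun _ => 0%N) (fun _ => 0%N) (cstep (UVs l)).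
  rewrite cstep_W; apply: chgZ; apply: chg_ext (chg_pb hu hv) => j; lia.
split.
  by apply: chg_ext (chg_pb hu hc) => j; lia.
by apply: chg_ext (chg_pb hv hc) => j; lia.
Qed.

Lemma chg_disj (p q : WA) m : chg al be p -> chg be al q -> ~ (forall j, al j = be j) ->
  m \in msupp p -> m \notin msupp q.
Proof.
move=> hp hq hd mp; apply/negP => mq; apply: hd => j.
move: (hp _ mp) (hq _ mq) => /forallP /(_ j) /eqP e1 /forallP /(_ j) /eqP e2.
move: e1 e2; set x := alpha_of m j; set y := beta_of m j; lia.
Qed.

Lemma top_nz l : ~ (forall j, al j = be j) -> (UVs l).1 != 0 ->
  Ptop l != 0 /\ Mtop l != 0.
Proof.
move=> hd hU; have [hu hv] := UVs_chg l.
have [m mU] : exists m, m \in msupp (UVs l).1.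
  case e: (msupp (UVs l).1) => [|m s]; last by exists m; rewrite inE eqxx.
  by move: hU; rewrite -msupp_eq0 e.
have mV := chg_disj hu hv hd mU.
have cU : (UVs l).1@_m != 0 by rewrite -mcoeff_msupp.
have cV : (UVs l).2@_m = 0 by apply: memN_msupp_eq0.
split; apply/eqP => h.
  move: (congr1 (mcoeff m) h); rewrite /Ptop mcoeffZ mcoeffD cV add0r mcoeff0 => /eqP.
  by rewrite mulf_eq0 (negbTE cU) orbF; apply/negP; rewrite neq0Ci.
move: (congr1 (mcoeff m) h); rewrite /Mtop mcoeffB cV sub0r mcoeff0 => /eqP.
by rewrite oppr_eq0 (negbTE cU).
Qed.
End Charge.
Section ProdRule.
Variable (C : numClosedFieldType).
Lemma deriv_prodX (I : eqType) (r : seq I) (F : I -> {poly C}) (E : I -> nat) : uniq r ->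
  (\prod_(i <- r) F i ^+ E i)^`() =
  \sum_(j <- r) (E j)%:R *: ((F j)^`() * \prod_(i <- r) F i ^+ (E i - (i == j))).
Proof.
elim: r => [|x r ih] /=; first by rewrite !big_nil derivC.
case/andP => xr ur; rewrite !big_cons derivM deriv_exp ih //.
have h1 : \prod_(i <- r) F i ^+ (E i - (i == x)) = \prod_(i <- r) F i ^+ E i.
  rewrite big_seq_cond [RHS]big_seq_cond; apply: eq_bigr => i /andP[ir _].
  have -> : (i == x) = false by apply/negP => /eqP ei; move: xr; rewrite -ei ir.
  by rewrite subn0.
rewrite eqxx subn1 h1; congr (_ + _).
  by rewrite mulrnAl -mulrA scaler_nat.
rewrite mulr_sumr [LHS]big_seq_cond [RHS]big_seq_cond; apply: eq_bigr => j /andP[jr _].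
rewrite big_cons.
have -> : (x == j) = false by apply/negP => /eqP ej; move: xr; rewrite ej jr.
by rewrite subn0 -scalerAr mulrCA.
Qed.
End ProdRule.

Section Phi.
Variables (C : numClosedFieldType) (n : nat) (al be : 'I_n -> nat).
Local Notation WA := (WA C n).
Local Notation aX := (@aX C n).
Local Notation mon := ('X_{1..n + n}).
Local Notation alpha_of := (@alpha_of n).
Local Notation beta_of := (@beta_of n).
Local Notation mk := (@mk n).
Local Notation pbX := (@pbX C n).
Local Notation pb := (@pb C n).

Definition dd (j : 'I_n) : C := (al j)%:R - (be j)%:R.
Definition qq (j : 'I_n) : {poly C} := dd j *: 'X + 1.
Definition vv (i : 'I_(n + n)) : {poly C} := match split i with inl j => qq j | inr _ => 1 end.
Definition phi (p : WA) : {poly C} := mmap (@polyC C) vv p.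
Definition Qa (a : 'I_n -> nat) : {poly C} := \prod_(j < n) qq j ^+ a j.

Lemma phiD p q : phi (p + q) = phi p + phi q. Proof. exact: mmapD. Qed.
Lemma phiN p : phi (- p) = - phi p. Proof. exact: mmapN. Qed.
Lemma phiB p q : phi (p - q) = phi p - phi q. Proof. exact: mmapB. Qed.
Lemma phiZ c p : phi (c *: p) = c *: phi p. Proof. by rewrite /phi mmapZ mul_polyC. Qed.
Lemma phi0 : phi 0 = 0. Proof. exact: mmap0. Qed.
Lemma phi_sum I (r : seq I) (P : pred I) (F : I -> WA) :
  phi (\sum_(i <- r | P i) F i) = \sum_(i <- r | P i) phi (F i).
Proof. exact: (big_morph phi phiD phi0). Qed.

Lemma phiX m : phi 'X_[m] = Qa (alpha_of m).
Proof.
rewrite /phi mmapX /mmap1 big_split_ord /= [X in _ * X]big1 ?mulr1; last first.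
  by move=> j _; rewrite /vv (unsplitK (inr j)) expr1n.
by apply: eq_bigr => j _; rewrite /vv (unsplitK (inl j)).
Qed.

Lemma phi_aX a b : phi (aX a b) = Qa a.
Proof. by rewrite /Defs.aX phiX; apply: eq_bigr => j _; rewrite alpha_mk. Qed.

Lemma phi_lin p : phi p = lin (fun m => Qa (alpha_of m)) p.
Proof.
rewrite /phi /mmap /lin; apply: eq_bigr => m _.
by rewrite mul_polyC -phiX /phi mmapX.
Qed.

Lemma lin_comm (f : {poly C} -> {poly C}) (G : mon -> {poly C}) p :
  (forall x y, f (x + y) = f x + f y) -> (forall c x, f (c *: x) = c *: f x) ->
  f (lin G p) = lin (fun m => f (G m)) p.
Proof.
move=> fD fZ; have f0 : f 0 = 0 by have := fZ 0 0; rewrite !scale0r.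
rewrite /lin (big_morph f fD f0); apply: eq_bigr => m _; exact: fZ.
Qed.

Lemma phi_lin_comm (G : mon -> WA) p : phi (lin G p) = lin (fun m => phi (G m)) p.
Proof. by rewrite /lin phi_sum; apply: eq_bigr => m _; rewrite phiZ. Qed.

Definition Bf (e1 e2 : C) (x y : {poly C}) : {poly C} :=
  e2 *: (x^`() * y) - e1 *: (x * y^`()).

Lemma Bf_l e1 e2 y : (forall x1 x2, Bf e1 e2 (x1 + x2) y = Bf e1 e2 x1 y + Bf e1 e2 x2 y) /\
  (forall c x, Bf e1 e2 (c *: x) y = c *: Bf e1 e2 x y).
Proof.
split.
  move=> x1 x2; rewrite /Bf derivD !mulrDl !scalerDr; set a := e2 *: _; set b := e2 *: _.
  set c := e1 *: _; set d := e1 *: _; by rewrite opprD addrACA.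
move=> c x; rewrite /Bf derivZ -!scalerAl !scalerA (mulrC e2) (mulrC e1) -!scalerA scalerBr.
by [].
Qed.

Lemma Bf_r e1 e2 x : (forall y1 y2, Bf e1 e2 x (y1 + y2) = Bf e1 e2 x y1 + Bf e1 e2 x y2) /\
  (forall c y, Bf e1 e2 x (c *: y) = c *: Bf e1 e2 x y).
Proof.
split.
  move=> y1 y2; rewrite /Bf derivD !mulrDr !scalerDr; set a := e2 *: _; set b := e2 *: _.
  set c := e1 *: _; set d := e1 *: _; by rewrite opprD addrACA.
move=> c y; rewrite /Bf derivZ -!scalerAr !scalerA (mulrC e2) (mulrC e1) -!scalerA scalerBr.
by [].
Qed.

Lemma phi_bil e1 e2 (F : mon -> mon -> WA) P Q :
  (forall m1 m2, m1 \in msupp P -> m2 \in msupp Q ->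
     phi (F m1 m2) = Bf e1 e2 (Qa (alpha_of m1)) (Qa (alpha_of m2))) ->
  phi (bil F P Q) = Bf e1 e2 (phi P) (phi Q).
Proof.
move=> h; rewrite /bil phi_lin_comm (phi_lin P) (lin_comm _ _ (Bf_l e1 e2 (phi Q)).1 (Bf_l e1 e2 (phi Q)).2).
apply: lin_ext => m1 h1; rewrite phi_lin_comm (phi_lin Q).
rewrite (lin_comm _ _ (Bf_r e1 e2 _).1 (Bf_r e1 e2 _).2).
by apply: lin_ext => m2 h2; apply: h.
Qed.
End Phi.
Section Phi2.
Variables (C : numClosedFieldType) (n : nat) (al be : 'I_n -> nat).
Local Notation WA := (WA C n).
Local Notation aX := (@aX C n).
Local Notation mon := ('X_{1..n + n}).
Local Notation alpha_of := (@alpha_of n).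
Local Notation beta_of := (@beta_of n).
Local Notation pbX := (@pbX C n).
Local Notation pb := (@pb C n).
Local Notation dd := (@dd C n al be).
Local Notation qq := (@qq C n al be).
Local Notation Qa := (@Qa C n al be).
Local Notation phi := (@phi C n al be).

Lemma QaD (a b : 'I_n -> nat) : Qa (fun j => a j + b j)%N = Qa a * Qa b.
Proof. by rewrite /Qa -big_split /=; apply: eq_bigr => j _; rewrite exprD. Qed.

Lemma qq_deriv j : (qq j)^`() = (dd j)%:P.
Proof. by rewrite /qq derivD derivZ derivX derivC addr0 alg_polyC. Qed.

Lemma Qa_deriv (a : 'I_n -> nat) :
  (Qa a)^`() = \sum_(j < n) ((a j)%:R * dd j) *: Qa (fun i => a i - (i == j))%N.
Proof.
rewrite /Qa deriv_prodX ?index_enum_uniq //; apply: eq_bigr => j _.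
by rewrite qq_deriv mul_polyC scalerA.
Qed.

Lemma Qa_shiftl (a b : 'I_n -> nat) j (c : C) :
  ((a j)%:R * c) *: (Qa (fun i => a i - (i == j))%N * Qa b) =
  ((a j)%:R * c) *: Qa (fun i => a i + b i - (i == j))%N.
Proof.
case: (posnP (a j)) => [->|hj]; first by rewrite mul0r !scale0r.
rewrite -QaD; congr (_ *: _); rewrite /Qa; apply: eq_bigr => i _; congr (_ ^+ _).
case: (eqVneq i j) => [->|_]; last by rewrite !subn0.
by rewrite /= addnC addnBA // addnC.
Qed.

Lemma Qa_shiftr (a b : 'I_n -> nat) j (c : C) :
  ((b j)%:R * c) *: (Qa a * Qa (fun i => b i - (i == j))%N) =
  ((b j)%:R * c) *: Qa (fun i => a i + b i - (i == j))%N.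
Proof.
rewrite [Qa a * _]mulrC Qa_shiftl; congr (_ *: _); rewrite /Qa; apply: eq_bigr => i _.
by rewrite addnC.
Qed.

Lemma phi_pbX (m1 m2 : mon) (e1 e2 : C) :
  (forall j, (beta_of m1 j)%:R = (alpha_of m1 j)%:R - e1 * dd j :> C) ->
  (forall j, (beta_of m2 j)%:R = (alpha_of m2 j)%:R - e2 * dd j :> C) ->
  phi (pbX m1 m2) = Bf e1 e2 (Qa (alpha_of m1)) (Qa (alpha_of m2)).
Proof.
move=> h1 h2.
rewrite /pbX phi_sum /Bf !Qa_deriv mulr_suml mulr_sumr !scaler_sumr -sumrB.
apply: eq_bigr => j _; rewrite phiZ phi_aX.
rewrite -scalerAl -scalerAr Qa_shiftl Qa_shiftr !scalerA -scalerBl.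
congr (_ *: _); rewrite !natrM h1 h2; ring.
Qed.
End Phi2.
Section Phi3.
Variables (C : numClosedFieldType) (n : nat) (al be : 'I_n -> nat).
Local Notation WA := (WA C n).
Local Notation mon := ('X_{1..n + n}).
Local Notation alpha_of := (@alpha_of n).
Local Notation beta_of := (@beta_of n).
Local Notation pbX := (@pbX C n).
Local Notation pb := (@pb C n).
Local Notation dd := (@dd C n al be).
Local Notation Qa := (@Qa C n al be).
Local Notation phi := (@phi C n al be).
Local Notation chg := (@chg C n).

Lemma chg_C a b (p : WA) m : chg a b p -> m \in msupp p ->
  forall j, (beta_of m j)%:R = (alpha_of m j)%:R - ((a j)%:R - (b j)%:R) :> C.
Proof.
move=> hp mp j; move: (hp _ mp) => /forallP /(_ j) /eqP e.
have : ((alpha_of m j)%:R + (b j)%:R = (beta_of m j)%:R + (a j)%:R :> C) by rewrite -!natrD e.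
by move=> e'; rewrite opprB addrA e' addrK.
Qed.

Lemma phi_pb a1 b1 a2 b2 (e1 e2 : C) (P Q : WA) : chg a1 b1 P -> chg a2 b2 Q ->
  (forall j, (a1 j)%:R - (b1 j)%:R = e1 * dd j) -> (forall j, (a2 j)%:R - (b2 j)%:R = e2 * dd j) ->
  phi (pb P Q) = Bf e1 e2 (phi P) (phi Q).
Proof.
move=> hP hQ h1 h2; apply: phi_bil => m1 m2 m1P m2Q; apply: phi_pbX => j.
  by rewrite (chg_C hP m1P) h1.
by rewrite (chg_C hQ m2Q) h2.
Qed.

Lemma size_deriv0 (p : {poly C}) : size p^`() = (size p).-1.
Proof.
have [hp|hp] := leqP (size p) 1.
  by rewrite (size1_polyC hp) derivC size_poly0 size_polyC; case: (_ != _).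
apply/eqP; rewrite eqn_leq; apply/andP; split.
  have p0 : p != 0 by rewrite -size_poly_gt0 (ltn_trans _ hp).
  by have := lt_size_deriv p0; case: (size p).
have e : (size p).-2.+1 = (size p).-1 by case: (size p) hp => [|[|]].
have hne : p^`()`_(size p).-2 != 0.
  rewrite coef_deriv e mulrn_eq0 negb_or; apply/andP; split; first by case: (size p) hp => [|[|]].
  have p0 : p != 0 by rewrite -size_poly_gt0 (ltn_trans _ hp).
  by have := lead_coef_eq0 p; rewrite /lead_coef => ->.
rewrite -e ltnNge; apply/negP => /leq_sizeP /(_ _ (leqnn _)) h.
by move: hne; rewrite h eqxx.
Qed.

Lemma poly_step (u v : {poly C}) (k : C) : k != 0 -> u != 0 -> v != 0 -> (3 <= size (u * v)%R)%N ->
  let w := (k *: (u * v)^`())^`() in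
  [/\ u * w != 0, v * w != 0 & (3 <= size ((u * w) * (v * w))%R)%N].
Proof.
move=> k0 u0 v0 hs w.
have sw : size w = (size (u * v)).-2 by rewrite /w derivZ size_scale // !size_deriv0.
have w0 : w != 0 by rewrite -size_poly_gt0 sw; case: (size (u * v)) hs => [|[|[|]]].
have uw0 : u * w != 0 by rewrite mulf_neq0.
have vw0 : v * w != 0 by rewrite mulf_neq0.
split => //.
rewrite size_mul // !size_mul //.
move: hs; rewrite size_mul // => hs.
move: sw; rewrite size_mul // => sw.
have := size_poly_gt0 u; have := size_poly_gt0 v; rewrite u0 v0.
move: hs sw; set su := size u; set sv := size v; set sww := size w; lia.
Qed.
End Phi3.
Section Final.
Variables (C : numClosedFieldType) (n : nat).
Local Notation WA := (WA C n).
Local Notation aX := (@aX C n).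
Local Notation mon := ('X_{1..n + n}).

Lemma wdeg_approx d (p P : WA) : approx d p P -> P != 0 -> wdeg p = Some d.
Proof.
move=> ap P0; have hle := approx_le ap; case: ap => hP hl.
have [m mP] : exists m, m \in msupp P.
  case e: (msupp P) => [|m s]; last by exists m; rewrite inE eqxx.
  by move: P0; rewrite -msupp_eq0 e.
have dm : mdeg m = d by apply/eqP; apply: hP.
have c0 : (p - P)@_m = 0.
  apply: memN_msupp_eq0; apply/negP => /hl; by rewrite dm ltnn.
have pm : p@_m != 0.
  move: c0; rewrite mcoeffB => /eqP; rewrite subr_eq0 => /eqP ->; by rewrite -mcoeff_msupp.
have p0 : p != 0 by apply: contraNneq pm => ->; rewrite mcoeff0.
rewrite /wdeg (negbTE p0); congr Some; apply/eqP; rewrite eqn_leq; apply/andP; split.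
  have : (msize p <= d.+1)%N.
    rewrite msizeE; apply/bigmax_leqP_seq => m' /hle h _; by [].
  by case: (msize p).
have := msize_mdeg_lt (p := p) (m := m); rewrite mcoeff_msupp pm dm => /(_ isT).
by case: (msize p).
Qed.

Lemma hmg_aX d a b : (\sum_(j < n) a j + \sum_(j < n) b j)%N = d -> hmg d (aX a b).
Proof.
by move=> e m; rewrite /Defs.aX msuppX inE => /eqP ->; rewrite mdeg_mk e.
Qed.

Lemma hmgD d (p q : WA) : hmg d p -> hmg d q -> hmg d (p + q). Proof. exact: allmD. Qed.
Lemma hmgB d (p q : WA) : hmg d p -> hmg d q -> hmg d (p - q). Proof. exact: allmB. Qed.
Lemma hmgZ d c (p : WA) : hmg d p -> hmg d (c *: p). Proof. exact: allmZ. Qed.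
Lemma approx_self d (P : WA) : hmg d P -> approx d P P.
Proof. by move=> h; split => //; rewrite subrr; apply: allm0. Qed.
End Final.

Lemma size_prod1 (C : numClosedFieldType) (I : eqType) (r : seq I) (F : I -> {poly C}) :
  (forall i, F i != 0) -> (size (\prod_(i <- r) F i)).-1 = (\sum_(i <- r) (size (F i)).-1)%N.
Proof.
move=> nz; elim: r => [|x r ih]; first by rewrite !big_nil size_poly1.
have pr0 : \prod_(i <- r) F i != 0 by rewrite prodf_seq_neq0; apply/allP => i _ /=; exact: nz.
rewrite !big_cons size_mul // -ih.
have := size_poly_gt0 (F x); have := size_poly_gt0 (\prod_(i <- r) F i); rewrite nz pr0.
set a := size _; set b := size _; lia.
Qed.
Section Final2.
Variables (C : numClosedFieldType) (n : nat) (al be : 'I_n -> nat).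
Local Notation WA := (WA C n).
Local Notation aX := (@aX C n).
Local Notation dd := (@dd C n al be).
Local Notation qq := (@qq C n al be).
Local Notation Qa := (@Qa C n al be).
Local Notation phi := (@phi C n al be).
Local Notation UVs := (@UVs C n al be).
Local Notation chg := (@chg C n).

Lemma qq_nz j : qq j != 0.
Proof.
apply/eqP => h; move: (congr1 (fun p => p.[0]) h).
by rewrite /qq hornerD hornerZ hornerX hornerC mulr0 add0r horner0 => /eqP; rewrite oner_eq0.
Qed.

Lemma size_qq j : (size (qq j)).-1 = (dd j != 0).
Proof.
rewrite /qq; have [->|d0] := eqVneq (dd j) 0; first by rewrite scale0r add0r size_poly1.
have hX : size (dd j *: 'X) = 2 by rewrite size_scale // size_polyX.
by rewrite size_polyDl hX // size_poly1.
Qed.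

Lemma Qa_nz c : Qa c != 0.
Proof. by apply/prodf_neq0 => j _; apply: expf_neq0; apply: qq_nz. Qed.

Lemma size_Qa c : (size (Qa c)).-1 = (\sum_(j < n) (dd j != 0%R) * c j)%N.
Proof.
rewrite /Qa size_prod1; last by move=> j; apply: expf_neq0; apply: qq_nz.
by apply: eq_bigr => j _; rewrite size_exp size_qq.
Qed.

Lemma dd_nz j : (dd j != 0) = (al j != be j).
Proof. by rewrite /dd subr_eq0 eqr_nat. Qed.

Lemma cstep_chg l : chg (fun _ => 0%N) (fun _ => 0%N) (cstep (UVs l)).
Proof.
have [hu hv] := UVs_chg C al be l.
rewrite cstep_W; apply: chgZ; apply: chg_ext (chg_pb hu hv) => j; lia.
Qed.

Lemma uv_inv l : (2 <= \sum_(j < n) (al j != be j) * (al j + be j))%N ->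
  [/\ phi (UVs l).1 != 0, phi (UVs l).2 != 0 & (3 <= size (phi (UVs l).1 * phi (UVs l).2)%R)%N].
Proof.
move=> hs; elim: l => [|l [hu hv hsz]].
  rewrite /= !phi_aX Qa_nz Qa_nz -QaD; split => //.
  have := size_Qa (fun j => al j + be j)%N.
  under eq_bigr do rewrite dd_nz.
  move: hs; set s := (\sum_(_ < _) _)%N; case: (size _) => [|m] /= hs'; lia.
have [cu cv] := UVs_chg C al be l.
have cc : chg (fun _ => 0%N) (fun _ => 0%N) (cstep (UVs l)) by apply: cstep_chg.
have e1 : forall j, (al j)%:R - (be j)%:R = 1 * dd j :> C by move=> j; rewrite mul1r.
have e2 : forall j, (be j)%:R - (al j)%:R = -1 * dd j :> C by move=> j; rewrite mulN1r opprB.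
have e0 : forall j, (0%N)%:R - (0%N)%:R = 0 * dd j :> C by move=> j; rewrite mul0r subrr.
set u := phi (UVs l).1 in hu hv hsz *; set v := phi (UVs l).2 in hu hv hsz *.
have hc : phi (cstep (UVs l)) = (- ('i *+ 2)) *: (u * v)^`().
  rewrite cstep_W phiZ (phi_pb cu cv e1 e2) /Bf derivM -/u -/v.
  by rewrite scaleN1r scale1r -opprD scaleNr scalerN.
have knz : (- ('i *+ 2) : C) != 0 by rewrite oppr_eq0 mulrn_eq0 negb_or /= neq0Ci.
have [h1 h2 h3] := poly_step knz hu hv hsz.
have -> : phi (UVs l.+1).1 = - (u * ((- ('i *+ 2)) *: (u * v)^`())^`()).
  by rewrite /= (phi_pb cu cc e1 e0) hc /Bf scale0r sub0r scale1r.
have -> : phi (UVs l.+1).2 = v * ((- ('i *+ 2)) *: (u * v)^`())^`().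
  by rewrite /= (phi_pb cv cc e2 e0) hc /Bf scale0r sub0r scaleN1r opprK.
by rewrite oppr_eq0 mulNr size_opp; split.
Qed.
End Final2.
Lemma perp_facts n (al be : 'I_n -> nat) : in_Aperp al be ->
  [/\ ~ (forall j, al j = be j), (3 <= gsize al be)%N &
      (2 <= \sum_(j < n) (al j != be j) * (al j + be j))%N].
Proof.
case=> nA0 [nA1 [nA2 [nAeq nAom]]].
have gs : gsize al be = (\sum_(j < n) al j + \sum_(j < n) be j)%N by rewrite /gsize big_split.
have ndiag : ~ (forall j, al j = be j).
  move=> hd; have e : gsize al be = (\sum_(j < n) al j + \sum_(j < n) al j)%N.
    by rewrite gs; congr (_ + _)%N; apply: eq_bigr => j _; rewrite hd.
  move: e; set s := (\sum_(_ < _) _)%N => e.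
  have [h|h] : (s <= 1)%N \/ (2 <= s)%N by lia.
    by apply: nA0; split => //; lia.
  by apply: nAeq; split => //; lia.
have g3 : (3 <= gsize al be)%N.
  have g0 : gsize al be != 0%N.
    apply/eqP => /eqP; rewrite /gsize sum_nat_eq0 => /forallP h; apply: ndiag => j.
    by move: (h j); rewrite addn_eq0 => /andP[/eqP -> /eqP ->].
  have g1 : gsize al be != 1%N by apply/eqP.
  have g2 : gsize al be != 2%N by apply/eqP => e; apply: nA2.
  by move: g0 g1 g2; set t := gsize al be; lia.
split => //.
rewrite leqNgt; apply/negP => hS.
have [k hk] : exists k, al k != be k.
  apply/existsP; apply: contraT; rewrite negb_exists => /forallP h; exfalso; apply: ndiag => j.
  by move: (h j); rewrite negbK => /eqP.
move: hS; rewrite (bigD1 k) //= hk mul1n => hS.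
have hk1 : (al k + be k = 1)%N.
  by move: hS hk; set r := (\sum_(_ < _ | _) _)%N; case: (al k) => [|[|?]]; case: (be k) => [|[|?]] //=; lia.
have hr : (\sum_(i < n | i != k) (al i != be i) * (al i + be i) = 0)%N.
  by move: hS; rewrite hk1; set r := (\sum_(_ < _ | _) _)%N; lia.
have oth : forall j, j != k -> al j = be j.
  move=> j hj; move/eqP: hr; rewrite sum_nat_eq0 => /forallP /(_ j); rewrite hj /=.
  case: (eqVneq (al j) (be j)) => // ne; rewrite /= mul1n addn_eq0 => /andP[/eqP a /eqP b].
  by move: ne; rewrite a b eqxx.
apply: nAom; split => //; exists k; split; first by split.
move=> k' [h1 h2]; apply/eqP; apply: contraT => ne.
by move: hk; rewrite (h2 k) ?eqxx // eq_sym.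
Qed.

Unset Implicit Arguments.
Unset Strict Implicit.

Theorem theorem7 (C : numClosedFieldType) (n : nat) (hn : (1 <= n)%N)
    (alpha beta : 'I_n -> nat) (sigma : bool)
    (hge : lexge alpha beta)
    (hsig : sigma = false -> lexgt alpha beta)
    (hperp : in_Aperp alpha beta) :
  forall l : nat,
    wdeg (@ychain C n alpha beta sigma l)
      = Some (3 ^ l * (gsize alpha beta - 2) + 2)%N
    /\ (3 ^ l + 2 <= 3 ^ l * (gsize alpha beta - 2) + 2)%N.
Proof.
move=> l; have [ndiag g3 s2] := perp_facts hperp.
set d := gsize alpha beta.
split; last first.
  by rewrite leq_add2r leq_pmulr // subn_gt0.
have gs : (\sum_(j < n) alpha j + \sum_(j < n) beta j)%N = d by rewrite /d /gsize big_split.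
have gs' : (\sum_(j < n) beta j + \sum_(j < n) alpha j)%N = d by rewrite addnC.
have hP0 : approx d (gpm C true alpha beta) (Ptop C alpha beta 0).
  rewrite /gpm dagger_aX /Ptop /=; apply: approx_self; apply: hmgZ; apply: hmgD; exact: hmg_aX.
have hM0 : approx d (gpm C false alpha beta) (Mtop C alpha beta 0).
  rewrite /gpm dagger_aX /Mtop /=; apply: approx_self; apply: hmgB; exact: hmg_aX.
have [ap am] := chain_approx (ltnW g3) hP0 hM0 l.
have [hu _ _] := uv_inv C l s2.
have U0 : (UVs C alpha beta l).1 != 0.
  by apply: contraNneq hu => ->; rewrite phi0.
have [P0 M0] := top_nz ndiag U0.
rewrite /ychain; case: sigma {hsig}.
  exact: wdeg_approx ap P0.
exact: wdeg_approx am M0.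
Qed.
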